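(* Let $\rho_A,\rho_B,\rho_O,\rho_T>0$, $\boldsymbol\alpha\in\mathbb R^c$, $\boldsymbol v_1\in\mathbb R^d$, $\mathcal Z=\{\boldsymbol z_x\}_{x\in[c]}\in(\mathbb R^d)^c$, and $\boldsymbol z'_x=\rho_A\boldsymbol z_x+\frac{\rho_B}{d_x}\sum_{y\in[c]}w_{x,y}\boldsymbol z_y+\rho_O\sum_{y\in[c]}\alpha_y\boldsymbol z_y+\rho_T\boldsymbol v_1$; let $\boldsymbol Z,\boldsymbol Z'\in\mathbb R^{d\times c}$ have columns $\boldsymbol z_x$, $\boldsymbol z'_x$. Let $\boldsymbol M=\rho_A\boldsymbol I+\rho_B\boldsymbol D^{-1/2}\boldsymbol W\boldsymbol D^{-1/2}$ with eigenvalues $\lambda_1,\dots,\lambda_c$ in non-increasing order of absolute value and orthonormal eigen-decomposition $\boldsymbol M=[\boldsymbol f\ \boldsymbol X\ \boldsymbol Y]\,\mathrm{diag}(\lambda_1,\boldsymbol\Lambda,\boldsymbol\Lambda')\,[\boldsymbol f\ \boldsymbol X\ \boldsymbol Y]^\top$, where $\boldsymbol X$ holds eigenvectors for $\lambda_2,\dots,\lambda_q$ and $\boldsymbol Y$ for $\lambda_{q+1},\dots,\lambda_c$ ($2\le q<c$); let $\delta_{\boldsymbol M}=|\lambda_q/\lambda_{q+1}|$. Let $\sigma:\mathbb R^d\to\mathbb R^d$ be a great mapping w.r.t. $(\gamma_1,\gamma_2,\{\boldsymbol Z'\},\boldsymbol X)$ and w.r.t. $(\gamma_1',\gamma_2',\{\boldsymbol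 Z'\},\boldsymbol Y)$. Then, provided $\lambda_{q+1}\ne0$, $\|\boldsymbol Z\boldsymbol D^{1/2}\boldsymbol X\|\ne0$ and $\|\boldsymbol Z\boldsymbol D^{1/2}\boldsymbol Y\|\ne0$, $$\frac{\|\sigma(\boldsymbol Z')\boldsymbol D^{1/2}\boldsymbol X\|}{\|\boldsymbol Z\boldsymbol D^{1/2}\boldsymbol X\|}\ge\delta_{\boldsymbol M}\frac{\gamma_1}{\gamma_2'}\,\frac{\|\sigma(\boldsymbol Z')\boldsymbol D^{1/2}\boldsymbol Y\|}{\|\boldsymbol Z\boldsymbol D^{1/2}\boldsymbol Y\|}.$$
   Context: $\mathcal G$ is a connected undirected graph on $[c]$ with (0/1) adjacency matrix $\widetilde{\boldsymbol W}$ and stationary distribution $\boldsymbol\pi$ of its random walk (all $\pi_x>0$). $\boldsymbol W=\{w_{x,y}\}$ with $w_{x,y}=\widetilde w_{x,y}\pi_x\pi_y$, $d_x=\sum_yw_{x,y}$, $\boldsymbol D=\mathrm{diag}(d_1,\dots,d_c)$. $\|\cdot\|$ is the Frobenius norm. For $\sigma:\mathbb R^d\to\mathbb R^d$ and $\boldsymbol Z\in\mathbb R^{d\times c}$, $\sigma(\boldsymbol Z)$ means $\sigma$ applied to each column. Great mapping: for a set $\mathscr Z\subseteq\mathbb R^{d\times c}$, a matrix $\boldsymbol U\in\mathbb R^{c\times p}$ with orthonormal columns, and scalars $\gamma_1,\gamma_2>0$, a function $\sigma:\mathbb R^d\to\mathbb R^d$ is a great mapping w.r.t. $(\gamma_1,\gamma_2,\mathscr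 Z,\boldsymbol U)$ if for all $\boldsymbol Z\in\mathscr Z$, $\gamma_1\|\boldsymbol Z\boldsymbol D^{1/2}\boldsymbol U\|\le\|\sigma(\boldsymbol Z)\boldsymbol D^{1/2}\boldsymbol U\|\le\gamma_2\|\boldsymbol Z\boldsymbol D^{1/2}\boldsymbol U\|$. *)

(* Defs.v *)
From mathcomp Require Import all_boot all_order all_algebra.
Set Implicit Arguments.
Unset Strict Implicit.
Unset Printing Implicit Defensive.
Import Order.TTheory GRing.Theory Num.Theory.
Local Open Scope ring_scope.

Section Defs.
Variable R : rcfType.

Definition frob (m n : nat) (A : 'M[R]_(m, n)) : R :=
  Num.sqrt (\sum_(i < m) \sum_(j < n) A i j ^+ 2).

(* k-th entry (0-based, as a nat index) of a row vector; 0 if out of range *)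
Definition rv_at (n : nat) (v : 'rV[R]_n) (k : nat) : R :=
  match @insub nat (fun i => i < n)%N 'I_n k with
  | Some i => v 0 i
  | None => 0
  end.

Definition adjacency01 (c : nat) (Wt : 'M[R]_c) : Prop :=
  (forall x y, Wt x y = 0 \/ Wt x y = 1) /\ (forall x y, Wt x y = Wt y x).

Definition graph_connected (c : nat) (Wt : 'M[R]_c) : Prop :=
  forall x y : 'I_c, connect (fun a b => Wt a b == 1) x y.

Definition gdeg (c : nat) (Wt : 'M[R]_c) (x : 'I_c) : R := \sum_(y < c) Wt x y.
Definition rw_trans (c : nat) (Wt : 'M[R]_c) : 'M[R]_c :=
  \matrix_(x, y) (Wt x y / gdeg Wt x).

Definition stationary_pos (c : nat) (Wt : 'M[R]_c) (pi : 'I_c -> R) : Prop :=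
  (forall x, 0 < pi x) /\ (\sum_(x < c) pi x = 1) /\
  (forall y, \sum_(x < c) pi x * rw_trans Wt x y = pi y).

Definition Wmat (c : nat) (Wt : 'M[R]_c) (pi : 'I_c -> R) : 'M[R]_c :=
  \matrix_(x, y) (Wt x y * pi x * pi y).
Definition dvec (c : nat) (Wt : 'M[R]_c) (pi : 'I_c -> R) (x : 'I_c) : R :=
  \sum_(y < c) Wmat Wt pi x y.
Definition Dsqrt (c : nat) (Wt : 'M[R]_c) (pi : 'I_c -> R) : 'M[R]_c :=
  diag_mx (\row_x Num.sqrt (dvec Wt pi x)).
Definition Dinvsqrt (c : nat) (Wt : 'M[R]_c) (pi : 'I_c -> R) : 'M[R]_c :=
  diag_mx (\row_x (Num.sqrt (dvec Wt pi x))^-1).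

Definition sigma_cols (d c : nat) (sigma : 'cV[R]_d -> 'cV[R]_d)
  (Z : 'M[R]_(d, c)) : 'M[R]_(d, c) :=
  \matrix_(i, x) (sigma (col x Z)) i 0.

Definition great_mapping (d c p : nat) (Dh : 'M[R]_c) (g1 g2 : R)
  (Zs : 'M[R]_(d, c) -> Prop) (U : 'M[R]_(c, p))
  (sigma : 'cV[R]_d -> 'cV[R]_d) : Prop :=
  0 < g1 /\ 0 < g2 /\ U^T *m U = 1%:M /\
  forall Z, Zs Z ->
    g1 * frob (Z *m Dh *m U) <= frob (sigma_cols sigma Z *m Dh *m U) /\
    frob (sigma_cols sigma Z *m Dh *m U) <= g2 * frob (Z *m Dh *m U).

Definition Zprime (d c : nat) (Wt : 'M[R]_c) (pi : 'I_c -> R)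
  (rA rB rO rT : R) (alpha : 'cV[R]_c) (v1 : 'cV[R]_d) (Z : 'M[R]_(d, c))
  : 'M[R]_(d, c) :=
  \matrix_(i, x) (rA * Z i x
                  + rB / dvec Wt pi x * \sum_(y < c) Wmat Wt pi x y * Z i y
                  + rO * \sum_(y < c) alpha y 0 * Z i y
                  + rT * v1 i 0).

Definition Mmat (c : nat) (Wt : 'M[R]_c) (pi : 'I_c -> R) (rA rB : R) : 'M[R]_c :=
  rA *: 1%:M + rB *: (Dinvsqrt Wt pi *m Wmat Wt pi *m Dinvsqrt Wt pi).

End Defs.

(* Main.v *)
Require Import Defs.
From mathcomp Require Import all_boot all_order all_algebra.
From mathcomp Require Import ring lra zify.
Import Order.TTheory GRing.Theory Num.Theory.
Local Open Scope ring_scope.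
Set Implicit Arguments.
Unset Strict Implicit.

Section Aux.
Variable R : rcfType.
Variable c : nat.
Variable Wt : 'M[R]_c.
Variable pi : 'I_c -> R.
Hypothesis hadj : adjacency01 Wt.
Hypothesis hconn : graph_connected Wt.
Hypothesis hpi : forall x, 0 < pi x.
Hypothesis hc : (1 < c)%N.

Lemma W_ge0 x y : 0 <= Wmat Wt pi x y.
Proof.
rewrite mxE; have [h _] := hadj; case: (h x y) => ->; rewrite ?mul0r // mul1r.
by apply: mulr_ge0; apply: ltW.
Qed.

Lemma W_sym x y : Wmat Wt pi x y = Wmat Wt pi y x.
Proof. by rewrite !mxE; have [_ h] := hadj; rewrite h; ring. Qed.

Lemma dpos x : 0 < dvec Wt pi x.
Proof.
have d0 : 0 <= dvec Wt pi x by apply: sumr_ge0 => y _; apply: W_ge0.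
rewrite lt_def d0 andbT; apply/negP => /eqP /psumr_eq0P H.
have Hz y : Wt x y = 0.
  have := H (fun y _ => W_ge0 _ _) y isT; rewrite mxE.
  have [h _] := hadj; case: (h x y) => -> //; rewrite mul1r => /eqP.
  by rewrite mulf_eq0 !gt_eqF // ?hpi.
have cl : closed (fun a b => Wt a b == 1) (pred1 x).
  move=> a b /eqP hab /=; apply/eqP/eqP => [ea|eb].
    by move: hab; rewrite ea Hz => /eqP; rewrite eq_sym oner_eq0.
  by move: hab; have [_ hs] := hadj; rewrite hs eb Hz => /eqP; rewrite eq_sym oner_eq0.
pose y : 'I_c := if (val x == 0)%N then Ordinal hc else Ordinal (ltn_trans (ltnSn 0) hc).
have := closed_connect cl (hconn x y).
rewrite !inE eqxx => /esym/eqP.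
rewrite /y; case: ifP => hx e; move: hx; rewrite -e //=.
Qed.

Variables rA rB : R.
Hypothesis hrA : 0 < rA.
Hypothesis hrB : 0 < rB.
Local Notation d := (dvec Wt pi).
Local Notation W := (Wmat Wt pi).
Local Notation M := (Mmat Wt pi rA rB).

Lemma sd_gt0 x : 0 < Num.sqrt (d x).
Proof. by rewrite sqrtr_gt0 dpos. Qed.

Lemma sd_sq x : Num.sqrt (d x) ^+ 2 = d x.
Proof. by rewrite sqr_sqrtr // ltW // dpos. Qed.

Lemma Mmat_E y x : M y x = rA * (y == x)%:R
   + rB * ((Num.sqrt (d y))^-1 * W y x * (Num.sqrt (d x))^-1).
Proof.
by rewrite /Mmat /Dinvsqrt mul_mx_diag mul_diag_mx !mxE.
Qed.

Lemma eig_harm (v : 'cV[R]_c) lam : M *m v = lam *: v -> forall x,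
  rB * \sum_y W x y * (v y 0 / Num.sqrt (d y))
  = (lam - rA) * d x * (v x 0 / Num.sqrt (d x)).
Proof.
move=> E0 x; have := congr1 (fun m : 'cV[R]_c => m x 0) E0; rewrite !mxE; clear E0.
under eq_bigr do rewrite Mmat_E mulrDl.
rewrite big_split /= (bigD1 x) //= big1 => [|y hy]; last by rewrite eq_sym (negbTE hy) mulr0 mul0r.
rewrite eqxx mulr1 addr0 => E.
have eS : \sum_y rB * ((Num.sqrt (d x))^-1 * W x y * (Num.sqrt (d y))^-1) * v y 0
   = rB * (Num.sqrt (d x))^-1 * \sum_y W x y * (v y 0 / Num.sqrt (d y)).
  by rewrite mulr_sumr; apply: eq_bigr => y _; rewrite /=; ring.
rewrite eS in E.
have hs := sd_gt0 x; have hs0 : Num.sqrt (d x) != 0 by rewrite gt_eqF.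
set S := \sum_y _ in E *; clearbody S.
have E2 : rB * S = (lam - rA) * v x 0 * Num.sqrt (d x).
  have E' : rB * (Num.sqrt (d x))^-1 * S = lam * v x 0 - rA * v x 0 by rewrite -E; ring.
  have -> : rB * S = Num.sqrt (d x) * (rB * (Num.sqrt (d x))^-1 * S) by field.
  by rewrite E'; ring.
by rewrite E2 -{2}(sd_sq x); field.
Qed.

Lemma nz_entry (v : 'cV[R]_c) : v != 0 -> exists i, v i 0 != 0.
Proof.
move=> nz; case: (pickP (fun i => v i 0 != 0)) => [i hi|h]; first by exists i.
case/negP: nz; apply/eqP/matrixP => a b; rewrite (ord1 b) mxE.
by have := h a => /= /negbFE/eqP.
Qed.

Lemma eig_bound (v : 'cV[R]_c) lam : M *m v = lam *: v -> v != 0 -> `|lam - rA| <= rB.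
Proof.
move=> E nz; have H := eig_harm E.
set yv := fun y => v y 0 / Num.sqrt (d y).
have [i hi] := nz_entry nz.
case: (@arg_maxP _ _ 'I_c i xpredT (fun y => `|yv y|) isT) => x _ Hx.
have mpos : 0 < `|yv x|.
  apply: (lt_le_trans _ (Hx i isT)); rewrite normr_gt0 /yv mulf_neq0 //.
  by rewrite invr_eq0 gt_eqF // sd_gt0.
have dm : 0 < d x * `|yv x| by rewrite mulr_gt0 // dpos.
rewrite -(ler_pM2r dm).
have -> : `|lam - rA| * (d x * `|yv x|) = `|rB * \sum_y W x y * yv y|.
  by rewrite H !normrM (ger0_norm (ltW (dpos x))); ring.
rewrite normrM ger0_norm ?(ltW hrB) //; apply: ler_wpM2l; first exact: ltW.
apply: (le_trans (ler_norm_sum _ _ _)); rewrite /dvec mulr_suml; apply: ler_sum => y _.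
by rewrite normrM ger0_norm ?W_ge0 //; apply: ler_wpM2l; [apply: W_ge0 | apply: Hx].
Qed.

Definition svec : 'cV[R]_c := \col_y Num.sqrt (d y).

Lemma eig_const (v : 'cV[R]_c) : M *m v = (rA + rB) *: v -> exists k, v = k *: svec.
Proof.
move=> E; have H := eig_harm E.
set yv := fun y => v y 0 / Num.sqrt (d y).
have Hh a : \sum_y W a y * yv y = d a * yv a.
  have := H a; rewrite addrC addKr => /(congr1 (fun t => rB^-1 * t)).
  by rewrite !mulrA mulVf ?gt_eqF // !mul1r.
pose i0 : 'I_c := Ordinal (ltn_trans (ltnSn 0) hc).
case: (@arg_maxP _ _ 'I_c i0 xpredT yv isT) => x _ Hx.
have key a b : yv a = yv x -> Wt a b == 1 -> yv b = yv x.
  move=> ha /eqP hab.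
  have S0 : \sum_y W a y * (yv a - yv y) = 0.
    under eq_bigr do rewrite mulrBr.
    by rewrite sumrB Hh /dvec mulr_suml subrr.
  have hge y : true -> 0 <= W a y * (yv a - yv y).
    by move=> _; rewrite mulr_ge0 ?W_ge0 // ha subr_ge0; apply: Hx.
  have := (psumr_eq0P hge S0) b; move=> /(_ isT).
  move=> /eqP; rewrite mulf_eq0 mxE hab mul1r mulf_eq0 (gt_eqF (hpi a)) (gt_eqF (hpi b)) /=.
  by rewrite subr_eq0 ha => /eqP.
have cl : closed (fun a b => Wt a b == 1) [pred z | yv z == yv x].
  move=> a b hab /=; apply/eqP/eqP => [ea|eb]; first exact: key ea hab.
  by apply: (key b a eb); have [_ hs] := hadj; rewrite hs.
exists (yv x); apply/matrixP => z j; rewrite (ord1 j) !mxE.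
have := closed_connect cl (hconn x z); rewrite !inE eqxx => /esym/eqP ez.
rewrite -ez /yv; field; by rewrite gt_eqF // sd_gt0.
Qed.

Lemma perron (v : 'cV[R]_c) lam : M *m v = lam *: v -> v != 0 ->
  rA + rB <= `|lam| -> exists k, v = k *: svec.
Proof.
move=> E nz hl; have hb := eig_bound E nz.
suff el : lam = rA + rB by apply: eig_const; rewrite -el.
move: hb; rewrite ler_norml => /andP[h1 h2].
case: (lerP 0 lam) => hs.
  by move: hl; rewrite ger0_norm // => h3; apply/eqP; rewrite eq_le; apply/andP; split; lra.
by move: hl; rewrite ltr0_norm // => h3; exfalso; have := hrA; lra.
Qed.

Lemma M_sym : M^T = M.
Proof. by apply/matrixP => i j; rewrite mxE !Mmat_E W_sym eq_sym; congr (_ + _); ring. Qed.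

Lemma M_svec : M *m svec = (rA + rB) *: svec.
Proof.
apply/matrixP => x j; rewrite (ord1 j) !mxE.
under eq_bigr do rewrite Mmat_E mulrDl mxE.
rewrite big_split /= (bigD1 x) //= big1 => [|y hy]; last by rewrite eq_sym (negbTE hy) mulr0 mul0r.
rewrite eqxx mulr1 addr0.
have hs0 : Num.sqrt (d x) != 0 by rewrite gt_eqF // sd_gt0.
have -> : \sum_y rB * ((Num.sqrt (d x))^-1 * W x y * (Num.sqrt (d y))^-1) * Num.sqrt (d y)
   = rB * (Num.sqrt (d x))^-1 * \sum_y W x y.
  rewrite mulr_sumr; apply: eq_bigr => y _.
  have hy : Num.sqrt (d y) != 0 by rewrite gt_eqF // sd_gt0.
  move: hy; move: (Num.sqrt (d y)) => sy hy.
  by field; rewrite hy hs0.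
change (\sum_y W x y) with (d x).
by rewrite -{3}(sd_sq x); field.
Qed.

Lemma unit_nz (n : nat) (v : 'cV[R]_n) : v^T *m v = 1%:M -> v != 0.
Proof.
move=> h; apply/eqP => v0; move: h; rewrite v0 trmx0 mul0mx => /matrixP /(_ 0 0).
by rewrite !mxE /= => /eqP; rewrite eq_sym oner_eq0.
Qed.

Lemma orth_s (fv xv : 'cV[R]_c) lam1 lj :
  M *m fv = lam1 *: fv -> M *m xv = lj *: xv ->
  fv^T *m fv = 1%:M -> xv^T *m xv = 1%:M -> fv^T *m xv = 0 ->
  `|lj| <= `|lam1| -> svec^T *m xv = 0.
Proof.
move=> Ef Ex ff xx fx hl.
have e1 : svec^T *m (M *m xv) = lj *: (svec^T *m xv) by rewrite Ex scalemxAr.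
have e2 : svec^T *m (M *m xv) = (rA + rB) *: (svec^T *m xv).
  by rewrite mulmxA -M_sym -trmx_mul M_svec linearZ /= scalemxAl.
case: (eqVneq lj (rA + rB)) => hj; last first.
  have key : (lj - (rA + rB)) *: (svec^T *m xv) = 0 by rewrite scalerBl -e1 -e2 subrr.
  by move: key => /eqP; rewrite scaler_eq0 subr_eq0 (negbTE hj) /= => /eqP.
exfalso.
have hp : 0 <= rA + rB by rewrite ltW // addr_gt0.
have h1 : rA + rB <= `|lj| by rewrite hj ger0_norm.
have h2 : rA + rB <= `|lam1| by apply: le_trans hl.
have [k hk] := perron Ex (unit_nz xx) h1.
have [k' hk'] := perron Ef (unit_nz ff) h2.
have k0 : k != 0.
  by apply/eqP => k0; have := unit_nz xx; rewrite hk k0 scale0r eqxx.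
have e : fv = (k' / k) *: xv by rewrite hk hk' scalerA divfK.
move: ff; rewrite {2}e -scalemxAr fx scaler0 => /matrixP/(_ 0 0).
by rewrite !mxE /= => /eqP; rewrite eq_sym oner_eq0.
Qed.

Lemma Zprime_D (dd : nat) rO rT (alpha : 'cV[R]_c) (v1 : 'cV[R]_dd) (Z : 'M[R]_(dd, c)) :
  Zprime Wt pi rA rB rO rT alpha v1 Z *m Dsqrt Wt pi =
  Z *m Dsqrt Wt pi *m M
  + (\col_i (rO * \sum_y alpha y 0 * Z i y + rT * v1 i 0)) *m svec^T.
Proof.
apply/matrixP => i x.
have hs0 : Num.sqrt (d x) != 0 by rewrite gt_eqF // sd_gt0.
have L : (Zprime Wt pi rA rB rO rT alpha v1 Z *m Dsqrt Wt pi) i x =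
   (rA * Z i x + rB / d x * \sum_y W x y * Z i y + rO * \sum_y alpha y 0 * Z i y
    + rT * v1 i 0) * Num.sqrt (d x).
  by rewrite /Dsqrt mul_mx_diag !mxE.
have R1 : (Z *m Dsqrt Wt pi *m M) i x = rA * Z i x * Num.sqrt (d x)
     + rB * (Num.sqrt (d x))^-1 * \sum_y W x y * Z i y.
  rewrite /Dsqrt mul_mx_diag mxE.
  rewrite (eq_bigr (fun y => Z i y * Num.sqrt (d y) * (rA * (y == x)%:R)
     + Z i y * Num.sqrt (d y) * (rB * ((Num.sqrt (d y))^-1 * W y x * (Num.sqrt (d x))^-1)))); last first.
    by move=> y _; rewrite Mmat_E mulrDr; congr (_ * _ + _ * _); rewrite !mxE.
  rewrite big_split /= (bigD1 x) //= big1 => [|y hy]; last by rewrite (negbTE hy) mulr0 mulr0.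
  rewrite eqxx mulr1 addr0 mulr_sumr; congr (_ + _); first by ring.
  apply: eq_bigr => y _; rewrite W_sym.
  have hy : Num.sqrt (d y) != 0 by rewrite gt_eqF // sd_gt0.
  move: hy; move: (Num.sqrt (d y)) => sy hy.
  by field; rewrite hy hs0.
have R2 : ((\col_i (rO * \sum_y alpha y 0 * Z i y + rT * v1 i 0)) *m svec^T) i x
   = (rO * \sum_y alpha y 0 * Z i y + rT * v1 i 0) * Num.sqrt (d x).
  by rewrite !mxE big_ord1 !mxE.
rewrite [in RHS]mxE L R1 R2.
set S := \sum_y W x y * Z i y; set T := \sum_y alpha y 0 * Z i y.
by rewrite -{1}(sd_sq x); field.
Qed.
End Aux.

Section Gen.
Variable R : rcfType.

Lemma gram (c n : nat) (P : 'M[R]_(c,n)) : P^T *m P = 1%:M ->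
  forall i1 i2, \sum_k P k i1 * P k i2 = (i1 == i2)%:R.
Proof.
move=> h i1 i2; have := congr1 (fun m : 'M[R]_n => m i1 i2) h; rewrite !mxE => <-.
by apply: eq_bigr => k _; rewrite mxE.
Qed.

Lemma sum_delta (n : nat) (F : 'I_n -> R) a : \sum_i F i * (i == a)%:R = F a.
Proof.
rewrite (bigD1 a) //= eqxx mulr1 big1 ?addr0 // => i /negbTE ->; by rewrite mulr0.
Qed.

Lemma eig_block (c n m : nat) (P : 'M[R]_(c,n)) (L : 'rV_n) (B : 'M_(c,m))
  (La : 'rV_m) (idx : 'I_m -> 'I_n) :
  P^T *m P = 1%:M -> (forall k j, P k (idx j) = B k j) ->
  (forall j, L 0 (idx j) = La 0 j) ->
  P *m diag_mx L *m P^T *m B = B *m diag_mx La.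
Proof.
move=> h hP hL.
pose E : 'M[R]_(n,m) := \matrix_(i,j) (i == idx j)%:R.
have hB : B = P *m E.
  apply/matrixP => k j; rewrite !mxE.
  under eq_bigr do rewrite mxE.
  by rewrite sum_delta hP.
have hD : diag_mx L *m E = E *m diag_mx La.
  rewrite mul_diag_mx mul_mx_diag; apply/matrixP => i j; rewrite !mxE.
  by case: eqP => [->|_]; rewrite ?hL ?mulr1 ?mul1r ?mulr0 ?mul0r.
rewrite {1}hB -!mulmxA (mulmxA P^T) h mul1mx hD mulmxA -hB.
done.
Qed.

Lemma frob_diag_ge m n (A : 'M[R]_(m,n)) (La : 'rV_n) t : 0 <= t ->
  (forall j, t <= `|La 0 j|) -> t * frob A <= frob (A *m diag_mx La).
Proof.
move=> t0 h; rewrite /frob mul_mx_diag.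
rewrite -(ger0_norm t0) -sqrtr_sqr -sqrtrM ?sqr_ge0 // ler_sqrt; last first.
  by apply: sumr_ge0 => i _; apply: sumr_ge0 => j _; apply: sqr_ge0.
rewrite mulr_sumr; apply: ler_sum => i _; rewrite mulr_sumr; apply: ler_sum => j _.
rewrite mxE exprMn mulrC ler_wpM2l ?sqr_ge0 //.
have ha := h j; have e : La 0 j ^+ 2 = `|La 0 j| ^+ 2 by rewrite real_normK ?num_real.
rewrite e; move: ha; set a := `|La 0 j|; move=> ha; nra.
Qed.

Lemma frob_diag_le m n (A : 'M[R]_(m,n)) (La : 'rV_n) t : 0 <= t ->
  (forall j, `|La 0 j| <= t) -> frob (A *m diag_mx La) <= t * frob A.
Proof.
move=> t0 h; rewrite /frob mul_mx_diag.
rewrite -(ger0_norm t0) -sqrtr_sqr -sqrtrM ?sqr_ge0 // ler_sqrt; last first.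
  rewrite mulr_ge0 ?sqr_ge0 //.
  by apply: sumr_ge0 => i _; apply: sumr_ge0 => j _; apply: sqr_ge0.
rewrite mulr_sumr; apply: ler_sum => i _; rewrite mulr_sumr; apply: ler_sum => j _.
rewrite mxE exprMn [_ ^+ 2 * (A i j ^+ 2)]mulrC ler_wpM2l ?sqr_ge0 //.
have ha := h j; have e : La 0 j ^+ 2 = `|La 0 j| ^+ 2 by rewrite real_normK ?num_real.
rewrite e; move: ha; set a := `|La 0 j|; have : 0 <= a by apply: normr_ge0.
move=> a0 ha; nra.
Qed.

Lemma rv_at_val n (v : 'rV[R]_n) (i : 'I_n) : rv_at v i = v 0 i.
Proof.
rewrite /rv_at; case: insubP => [j _ ej|]; last by rewrite ltn_ord.
by congr (v 0 _); apply: val_inj.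
Qed.

End Gen.

Unset Implicit Arguments.

Theorem corollary4 (R : rcfType) (c d q : nat)
  (Wt : 'M[R]_c) (pi : 'I_c -> R)
  (hadj : adjacency01 Wt) (hconn : graph_connected Wt)
  (hpi : stationary_pos Wt pi)
  (rA rB rO rT : R) (hrA : 0 < rA) (hrB : 0 < rB) (hrO : 0 < rO) (hrT : 0 < rT)
  (alpha : 'cV[R]_c) (v1 : 'cV[R]_d) (Z : 'M[R]_(d, c))
  (hq : (2 <= q)%N) (hqc : (q < c)%N)
  (f : 'cV[R]_c) (X : 'M[R]_(c, q.-1)) (Y : 'M[R]_(c, c - q))
  (lam1 : R) (Lam : 'rV[R]_(q.-1)) (Lam' : 'rV[R]_(c - q))
  (horth : (row_mx f (row_mx X Y))^T *m row_mx f (row_mx X Y) = 1%:M)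
  (hdecomp : Mmat Wt pi rA rB =
     row_mx f (row_mx X Y)
     *m diag_mx (row_mx lam1%:M (row_mx Lam Lam'))
     *m (row_mx f (row_mx X Y))^T)
  (hsorted : forall i j : nat, (i <= j)%N -> (j < c)%N ->
     `|rv_at (row_mx lam1%:M (row_mx Lam Lam')) j|
       <= `|rv_at (row_mx lam1%:M (row_mx Lam Lam')) i|)
  (sigma : 'cV[R]_d -> 'cV[R]_d) (g1 g2 g1' g2' : R)
  (hgX : great_mapping (Dsqrt Wt pi) g1 g2
           (fun Z0 => Z0 = Zprime Wt pi rA rB rO rT alpha v1 Z) X sigma)
  (hgY : great_mapping (Dsqrt Wt pi) g1' g2'
           (fun Z0 => Z0 = Zprime Wt pi rA rB rO rT alpha v1 Z) Y sigma)
  (hlam : rv_at (row_mx lam1%:M (row_mx Lam Lam')) q != 0)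
  (hZX : frob (Z *m Dsqrt Wt pi *m X) != 0)
  (hZY : frob (Z *m Dsqrt Wt pi *m Y) != 0) :
  let Z' := Zprime Wt pi rA rB rO rT alpha v1 Z in
  let L := row_mx lam1%:M (row_mx Lam Lam') in
  let deltaM := `| rv_at L q.-1 / rv_at L q | in
  frob (sigma_cols sigma Z' *m Dsqrt Wt pi *m X) / frob (Z *m Dsqrt Wt pi *m X)
  >= deltaM * (g1 / g2') *
     (frob (sigma_cols sigma Z' *m Dsqrt Wt pi *m Y) / frob (Z *m Dsqrt Wt pi *m Y)).

Proof.
cbv zeta.
set Z' := Zprime Wt pi rA rB rO rT alpha v1 Z.
set L := row_mx lam1%:M (row_mx Lam Lam').
have [hpi0 _] := hpi.
have hc : (2 <= c)%N by lia.
set P := row_mx f (row_mx X Y).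
pose idx0 : 'I_(1 + (q.-1 + (c - q))) := lshift (q.-1 + (c - q)) (0 : 'I_1).
pose idxX (j : 'I_q.-1) : 'I_(1 + (q.-1 + (c - q))) := rshift 1 (lshift (c - q) j).
pose idxY (j : 'I_(c - q)) : 'I_(1 + (q.-1 + (c - q))) := rshift 1 (rshift q.-1 j).
have P0 k : P k idx0 = f k 0 by rewrite /P row_mxEl.
have PX k j : P k (idxX j) = X k j by rewrite /P row_mxEr row_mxEl.
have PY k j : P k (idxY j) = Y k j by rewrite /P row_mxEr row_mxEr.
have L0 : L 0 idx0 = lam1 by rewrite /L row_mxEl mxE.
have LX j : L 0 (idxX j) = Lam 0 j by rewrite /L row_mxEr row_mxEl.
have LY j : L 0 (idxY j) = Lam' 0 j by rewrite /L row_mxEr row_mxEr.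
have G := gram horth.
have MX : Mmat Wt pi rA rB *m X = X *m diag_mx Lam.
  by rewrite hdecomp; apply: (eig_block horth PX LX).
have MY : Mmat Wt pi rA rB *m Y = Y *m diag_mx Lam'.
  by rewrite hdecomp; apply: (eig_block horth PY LY).
have Mf : Mmat Wt pi rA rB *m f = lam1 *: f.
  have P0' k (j : 'I_1) : P k ((fun _ => idx0) j) = f k j by rewrite (ord1 j) P0.
  have L0' (j : 'I_1) : L 0 ((fun _ => idx0) j) = (lam1%:M : 'M_1) 0 j.
    by rewrite (ord1 j) L0 mxE.
  rewrite hdecomp (eig_block horth P0' L0') mul_mx_diag.
  by apply/matrixP => k j; rewrite (ord1 j) !mxE mulrC.
have colE (B : 'M[R]_(c, q.-1)) j k : (col j B) k 0 = B k j by rewrite mxE.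
have Mcol (m : nat) (B : 'M[R]_(c, m)) (La : 'rV[R]_m) j :
    Mmat Wt pi rA rB *m B = B *m diag_mx La ->
    Mmat Wt pi rA rB *m col j B = La 0 j *: col j B.
  move=> E; apply/matrixP => k z; rewrite (ord1 z).
  have h := congr1 (fun m0 : 'M[R]_(c, m) => m0 k j) E.
  rewrite mul_mx_diag /= [in RHS]mxE in h.
  rewrite [in RHS]mxE [in RHS]mxE mulrC -h [in RHS]mxE.
  by rewrite [in LHS]mxE; apply: eq_bigr => y _; congr (_ * _); rewrite mxE.
have ip (i1 i2 : 'I_(1 + (q.-1 + (c - q)))) (u v : 'cV[R]_c) :
    (forall k, P k i1 = u k 0) -> (forall k, P k i2 = v k 0) ->
    u^T *m v = (i1 == i2)%:R%:M.
  move=> hu hv; apply/matrixP => a b; rewrite (ord1 a) (ord1 b) !mxE -G /= mulr1n.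
  by apply: eq_bigr => k _; rewrite mxE hu hv.
have ff : f^T *m f = 1%:M by rewrite (ip idx0 idx0 f f P0 P0) eqxx.
have colX j k : P k (idxX j) = (col j X) k 0 by rewrite PX mxE.
have colY j k : P k (idxY j) = (col j Y) k 0 by rewrite PY mxE.
have sX : (svec Wt pi)^T *m X = 0.
  apply/matrixP => a j; rewrite (ord1 a).
  have hl : `|Lam 0 j| <= `|lam1|.
    have := hsorted (val idx0) (val (idxX j)) isT.
    rewrite !rv_at_val L0 LX; apply => /=; have := ltn_ord j; lia.
  have xx : (col j X)^T *m col j X = 1%:M by rewrite (ip _ _ _ _ (colX j) (colX j)) eqxx.
  have fx : f^T *m col j X = 0.
    have ne : (idx0 == idxX j) = false by apply/negbTE; rewrite -val_eqE.
    by rewrite (ip _ _ _ _ P0 (colX j)) ne /= raddf0.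
  have h0 := orth_s hadj hconn hpi0 hc hrA hrB Mf (Mcol _ X Lam j MX) ff xx fx hl.
  have e : ((svec Wt pi)^T *m X) 0 j = ((svec Wt pi)^T *m col j X) 0 0.
    by rewrite !mxE; apply: eq_bigr => k _; rewrite !mxE.
  by rewrite e h0 !mxE.
have sY : (svec Wt pi)^T *m Y = 0.
  apply/matrixP => a j; rewrite (ord1 a).
  have hl : `|Lam' 0 j| <= `|lam1|.
    have := hsorted (val idx0) (val (idxY j)) isT.
    rewrite !rv_at_val L0 LY; apply => /=; have := ltn_ord j; lia.
  have xx : (col j Y)^T *m col j Y = 1%:M by rewrite (ip _ _ _ _ (colY j) (colY j)) eqxx.
  have fx : f^T *m col j Y = 0.
    have ne : (idx0 == idxY j) = false by apply/negbTE; rewrite -val_eqE.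
    by rewrite (ip _ _ _ _ P0 (colY j)) ne /= raddf0.
  have h0 := orth_s hadj hconn hpi0 hc hrA hrB Mf (Mcol _ Y Lam' j MY) ff xx fx hl.
  have e : ((svec Wt pi)^T *m Y) 0 j = ((svec Wt pi)^T *m col j Y) 0 0.
    by rewrite !mxE; apply: eq_bigr => k _; rewrite !mxE.
  by rewrite e h0 !mxE.
have ZX : Z' *m Dsqrt Wt pi *m X = Z *m Dsqrt Wt pi *m X *m diag_mx Lam.
  by rewrite /Z' (Zprime_D hadj hconn hpi0 hc) mulmxDl -!mulmxA MX sX mulmx0 addr0.
have ZY : Z' *m Dsqrt Wt pi *m Y = Z *m Dsqrt Wt pi *m Y *m diag_mx Lam'.
  by rewrite /Z' (Zprime_D hadj hconn hpi0 hc) mulmxDl -!mulmxA MY sY mulmx0 addr0.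
have hlq j : `|rv_at L q.-1| <= `|Lam 0 j|.
  have := hsorted (val (idxX j)) q.-1.
  rewrite !rv_at_val LX; apply => /=; have := ltn_ord j; lia.
have hlq1 j : `|Lam' 0 j| <= `|rv_at L q|.
  have := hsorted q (val (idxY j)).
  rewrite !rv_at_val LY; apply => /=; have := ltn_ord j; lia.
have [g1p [_ [_ hX]]] := hgX; have [hX1 _] := hX Z' erefl.
have [_ [g2p [_ hY]]] := hgY; have [_ hY2] := hY Z' erefl.
set A := frob (sigma_cols sigma Z' *m Dsqrt Wt pi *m X) in hX1 *.
set A' := frob (sigma_cols sigma Z' *m Dsqrt Wt pi *m Y) in hY2 *.
set B := frob (Z *m Dsqrt Wt pi *m X) in hZX *.
set B' := frob (Z *m Dsqrt Wt pi *m Y) in hZY *.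
have hB : 0 < B by rewrite lt_def hZX /B /frob sqrtr_ge0.
have hB' : 0 < B' by rewrite lt_def hZY /B' /frob sqrtr_ge0.
have hA : g1 * (`|rv_at L q.-1| * B) <= A.
  apply: le_trans hX1; rewrite ZX; apply: ler_wpM2l; first exact: ltW.
  exact: frob_diag_ge (normr_ge0 _) hlq.
have hA' : A' <= g2' * (`|rv_at L q| * B').
  apply: le_trans hY2 _; rewrite ZY; apply: ler_wpM2l; first exact: ltW.
  exact: frob_diag_le (normr_ge0 _) hlq1.
rewrite normrM normfV.
set a := `|rv_at L q.-1| in hA *; set b := `|rv_at L q| in hA' *.
have hb : 0 < b by rewrite normr_gt0.
have a0 : 0 <= a by apply: normr_ge0.
have h1 : A' / B' <= g2' * b by rewrite ler_pdivrMr // -mulrA.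
apply: (@le_trans _ _ (a / b * (g1 / g2') * (g2' * b))).
  apply: ler_wpM2l => //.
  by rewrite mulr_ge0 ?divr_ge0 // ltW.
have g2n : g2' != 0 by rewrite gt_eqF.
have bn : b != 0 by rewrite gt_eqF.
have -> : a / b * (g1 / g2') * (g2' * b) = g1 * a by field; rewrite g2n bn.
by rewrite ler_pdivlMr // -mulrA.
Qed.
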